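(* Let $\alpha$ be a concentrated system of weights for rank $r$ over $D$ (with $|D|=n$), and let $I=\{1,\dots,r\}$. Let $0<r'<r$ and for each $x\in D$ let $I'(x)\subsetneq I$ be a nonempty subset with $|I'(x)|=r'$. Then $$\left|\sum_{x\in D}\left(r\sum_{i\in I'(x)}\alpha_i(x)-r'\sum_{i\in I}\alpha_i(x)\right)\right|<1.$$
   Context: A full flag system of weights for rank $r$ over a finite set $D$ of $n\ge1$ points is $\alpha=\{(\alpha_1(x),\dots,\alpha_r(x))\}_{x\in D}$ with $0\le\alpha_1(x)<\cdots<\alpha_r(x)<1$. It is concentrated if $\alpha_r(x)-\alpha_1(x)<\frac{4}{nr^2}$ for all $x\in D$. *)

(* Defs.v *)
From mathcomp Require Import all_boot all_order all_algebra.
From mathcomp Require Import reals.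
Set Implicit Arguments. Unset Strict Implicit. Unset Printing Implicit Defensive.
Import Order.TTheory GRing.Theory Num.Theory.
Local Open Scope ring_scope.

(* A full flag system of weights for rank r over a finite set D:
   for each x, 0 <= alpha_1(x) < ... < alpha_r(x) < 1.
   Indices 1..r are represented by 'I_r (0-based). *)
Definition full_flag_weights (R : realType) (D : finType) (r : nat)
    (alpha : D -> 'I_r -> R) : Prop :=
  forall x : D,
    (forall i : 'I_r, 0 <= alpha x i) /\
    (forall i j : 'I_r, (i < j)%N -> alpha x i < alpha x j) /\
    (forall i : 'I_r, alpha x i < 1).

Definition concentrated (R : realType) (D : finType) (r : nat)
    (alpha : D -> 'I_r -> R) : Prop :=
  forall x : D, forall (i j : 'I_r),
    nat_of_ord i = 0%N -> nat_of_ord j = r.-1 ->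
    alpha x j - alpha x i < 4 / (#|D|%:R * (r%:R ^+ 2)).

(* Main.v *)
Require Import Defs.
From mathcomp Require Import all_boot all_order all_algebra.
From mathcomp Require Import reals.
From mathcomp Require Import ring lra.
Import Order.TTheory GRing.Theory Num.Theory.
Local Open Scope ring_scope.

Lemma perx (R : realType) (r r' : nat) (a : 'I_r -> R) (A : {set 'I_r}) (m M : R) :
  (r' <= r)%N -> #|A| = r' -> (forall i, m <= a i <= M) ->
  `| r%:R * (\sum_(i in A) a i) - r'%:R * (\sum_(i : 'I_r) a i) |
     <= r'%:R * (r - r')%:R * (M - m).
Proof.
move=> hr hA hb.
rewrite [X in r'%:R * X](bigID (fun i => i \in A)) /=.
have cC : #|~: A| = (r - r')%N by rewrite cardsCs setCK card_ord hA.
have e1 : \sum_(i in ~: A) a i = \sum_(i | i \notin A) a i.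
  by apply: eq_bigl => i; rewrite in_setC.
rewrite -e1.
have l1 : r'%:R * m <= \sum_(i in A) a i.
  rewrite -hA mulr_natl -sumr_const; apply: ler_sum => i _.
  by case/andP: (hb i).
have u1 : \sum_(i in A) a i <= r'%:R * M.
  rewrite -hA mulr_natl -sumr_const; apply: ler_sum => i _.
  by case/andP: (hb i).
have l2 : (r - r')%:R * m <= \sum_(i in ~: A) a i.
  rewrite -cC mulr_natl -sumr_const; apply: ler_sum => i _.
  by case/andP: (hb i).
have u2 : \sum_(i in ~: A) a i <= (r - r')%:R * M.
  rewrite -cC mulr_natl -sumr_const; apply: ler_sum => i _.
  by case/andP: (hb i).
have er : r%:R = r'%:R + (r - r')%:R :> R by rewrite -natrD subnKC.
rewrite er.
set S1 := \sum_(i in A) a i in l1 u1 *.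
set S2 := \sum_(i in ~: A) a i in l2 u2 *.
have k0 : 0 <= r'%:R :> R by [].
have K0 : 0 <= (r - r')%:R :> R by [].
rewrite ler_norml; apply/andP; split; nra.
Qed.

Theorem lemma2p5 (R : realType) (D : finType) (r r' : nat)
    (alpha : D -> 'I_r -> R) (I' : D -> {set 'I_r}) :
  (0 < #|D|)%N ->
  full_flag_weights alpha ->
  concentrated alpha ->
  (0 < r')%N -> (r' < r)%N ->
  (forall x : D, I' x != set0 /\ I' x != [set: 'I_r] /\ #|I' x| = r') ->
  `| \sum_(x : D) (r%:R * (\sum_(i in I' x) alpha x i)
                   - r'%:R * (\sum_(i : 'I_r) alpha x i)) | < 1.
Proof.
move=> hD hfl hc hr' hrr hI.
have r0 : (0 < r)%N by apply: leq_ltn_trans hrr.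
pose i0 := Ordinal r0.
have hl : (r.-1 < r)%N by rewrite prednK.
pose il := Ordinal hl.
set n := #|D|%:R : R.
have n0 : 0 < n by rewrite ltr0n.
pose t := 1 / (n * r%:R ^+ 2).
have t0 : 0 < t.
  by rewrite /t divr_gt0 // mulr_gt0 // exprn_gt0 // ltr0n.
have ct : 4 / (n * r%:R ^+ 2) = 4 * t by rewrite /t mulrA mulr1.
have nt : 1 / n = r%:R ^+ 2 * t.
  by rewrite /t; field; rewrite !pnatr_eq0 -!lt0n r0 hD.
have key : forall x : D,
  `| r%:R * (\sum_(i in I' x) alpha x i) - r'%:R * (\sum_(i : 'I_r) alpha x i) |
     < 1 / n.
  move=> x.
  have [_ [hlt _]] := hfl x.
  have hb : forall i, alpha x i0 <= alpha x i <= alpha x il.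
    move=> i; apply/andP; split.
      case: (posnP i) => [e|p].
        by rewrite (_ : i = i0) //; apply: val_inj.
      by apply/ltW/hlt.
    have : (i <= r.-1)%N by rewrite -ltnS prednK.
    rewrite leq_eqVlt => /orP [/eqP e|p].
      by rewrite (_ : i = il) //; apply: val_inj.
    by apply/ltW/hlt.
  have [_ [_ hc']] := hI x.
  apply: le_lt_trans (perx _ _ _ _ _ _ _ (ltnW hrr) hc' hb) _.
  have hd := hc x i0 il erefl erefl.
  rewrite ct in hd; rewrite nt.
  have er : r%:R = r'%:R + (r - r')%:R :> R by rewrite -natrD subnKC // ltnW.
  rewrite er.
  have k0 : 0 < r'%:R :> R by rewrite ltr0n.
  have K0 : 0 < (r - r')%:R :> R by rewrite ltr0n subn_gt0.
  set k := r'%:R in k0 er *; set K := (r - r')%:R in K0 er *.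
  set d := alpha x il - alpha x i0 in hd *.
  have kK : 0 < k * K by apply: mulr_gt0.
  have : k * K * d < k * K * (4 * t) by rewrite ltr_pM2l.
  have : k * K * (4 * t) <= (k + K) ^+ 2 * t.
    rewrite mulrA ler_pM2r //. have := sqr_ge0 (k - K). nra.
  lra.
apply: le_lt_trans (ler_norm_sum _ _ _) _.
apply: (@lt_le_trans _ _ (\sum_(x : D) (1 / n))).
  apply: ltr_sum => //.
  by apply/hasP; exists (enum_val (Ordinal hD)); rewrite ?mem_enum.
rewrite sumr_const -/n -mulr_natl mulrC -mulrA mulVf ?mulr1 //.
by rewrite gt_eqF.
Qed.
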